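(* Let $\Omega\subset\mathbb{R}^d$ ($d=2,3$) be a convex polygonal domain with a conforming mesh $\mathcal T$ of quadrilaterals/hexahedra, vertices $\vec x_i$, and let $\mathbb Q_1$ be the space of continuous piecewise bilinear (trilinear) functions on $\mathcal T$. Fix $\mathrm{Wi}>0$, $\beta\in(0,1)$, and a Dirichlet datum $\vec w$ with $\vec w\cdot\vec n=0$ on $\partial\Omega$. Consider the following fully discrete scheme for the Stokes flow of an Oldroyd-B fluid. Let $\vec\Sigma^0_h$ be the bilinear (trilinear) interpolant of a symmetric initial conformation tensor $\boldsymbol\sigma^0$. For $n\ge1$: (i) find $\vec u^n_h\in\mathbb Q_1^d$ with $\vec u^n_h|_{\partial\Omega}=\Pi_1\vec w$ and $p^n_h\in\mathbb Q_1$ with $$2\beta\int_\Omega\varepsilon(\vec u^n_h):\varepsilon(\vec v_h)-\int_\Omega p^n_h\operatorname{div}\vec v_h-\int_\Omega q_h\operatorname{div}\vec u^n_h-\int_\Omega(p^n_h-\Pi_0p^n_h)(q_h-\Pi_0q_h)=\frac{\beta-1}{\mathrm{Wi}}\int_\Omega\vec\Sigma^{n-1}_h:\varepsilon(\vec v_h)$$ for all $\vec v_h\in\mathbb Q_1^d$ vanishing on $\partial\Omega$ and all $q_h\in\mathbb Q_1$; (ii) at each vertex $\vec x_i$ compute $$\tfrac{1}{\Delta t}\big(\vec\Sigma^n_h(\vec x_i)-\vec F^n_{h,\Delta t}(\vec x_i)\,\vec\Sigma^{n-1}_h(\vec y^n_{h,\Delta t}(\vec x_i))\,\vec F^n_{h,\Delta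 t}(\vec x_i)^T\big)+\tfrac{1}{\mathrm{Wi}}(\vec\Sigma^n_h(\vec x_i)-\vec I)=0,$$ where $\vec y^n_{h,\Delta t}(\vec x)=\vec x-\Delta t\,\vec u^n_h(\vec x)$, $\vec F^n_{h,\Delta t}(\vec x_i)=\vec I+\Delta t\,\nabla\vec u^n_h(\vec x_i)$ with $\nabla\vec u^n_h(\vec x_i):=\frac{1}{|\hat{\vec x}_i|}\sum_{K\subseteq\hat{\vec x}_i}\int_K\nabla\vec u^n_h$, and $\vec\Sigma^{n-1}_h$ is evaluated at non-vertex points by bilinear (trilinear) interpolation of its vertex values. If $\boldsymbol\sigma^0$ is positive definite, then at each time step there exists $\Delta t>0$ such that the discrete conformation tensor $\vec\Sigma^n_h$ remains positive definite.
   Context: $\varepsilon(\vec v)=\tfrac12(\nabla\vec v+(\nabla\vec v)^T)$; $\Pi_0$ is the $L^2$ projection onto piecewise constants on $\mathcal T$; $\Pi_1$ is an interpolant onto $\mathbb Q_1$ traces; $\hat{\vec x}_i=\{K\in\mathcal T:\vec x_i\in\overline K\}$ is the patch of elements around vertex $\vec x_i$; $\vec I$ is the identity. The discrete conformation tensor is stored by its values at vertices and identified with the $\mathbb Q_1$ interpolant of these values. *)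

(* Defs.v *)
From HB Require Import structures.
From mathcomp Require Import all_boot all_order all_algebra.
From mathcomp Require Import all_classical all_reals all_analysis.
Set Implicit Arguments. Unset Strict Implicit. Unset Printing Implicit Defensive.
Import Order.TTheory GRing.Theory Num.Theory.
Import numFieldNormedType.Exports.
Local Open Scope ring_scope.
Local Open Scope classical_set_scope.

Section OldroydB.
Variable R : realType.
Variable d : nat.

Definition dotp (a b : 'rV[R]_d) : R := (a *m b^T) 0 0.
Definition ddot (A B : 'M[R]_d) : R := \tr (A *m B^T).
Definition posdef (M : 'M[R]_d) : Prop :=
  M^T = M /\ forall v : 'rV[R]_d, v != 0 -> 0 < (v *m M *m v^T) 0 0.

Variable m : nat.
Variables (nrm : 'I_m -> 'rV[R]_d) (cst : 'I_m -> R).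

Definition inOmega (x : 'rV[R]_d) : Prop := forall k, dotp x (nrm k) < cst k.
Definition inOmegabar (x : 'rV[R]_d) : Prop := forall k, dotp x (nrm k) <= cst k.
Definition onBoundary (x : 'rV[R]_d) : Prop :=
  inOmegabar x /\ exists k, dotp x (nrm k) = cst k.

Definition convex_polygonal_domain : Prop :=
  (forall k, dotp (nrm k) (nrm k) = 1) /\
  (exists x, inOmega x) /\
  (exists M : R, forall x, inOmegabar x -> forall j, `|x 0 j| <= M).

(* w . n = 0 on the boundary, at every boundary point where the outward
   unit normal is well defined (all active constraints share normal n_k). *)
Definition tangential (w : 'rV[R]_d -> 'rV[R]_d) : Prop :=
  forall x k, inOmegabar x -> dotp x (nrm k) = cst k ->
    (forall j, dotp x (nrm j) = cst j -> nrm j = nrm k) ->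
    dotp (w x) (nrm k) = 0.

(* ---------- the mesh: vertices V, elements K, each element being the
   image of the reference cube [0,1]^d by the Q1 (bi/trilinear) map
   built on its 2^d corners, indexed by {0,1}^d ---------- *)
Variables (V K : finType).
Variable xv : V -> 'rV[R]_d.
Variable loc : K -> {ffun 'I_d -> bool} -> V.

Definition cube : set 'rV[R]_d := [set xi | forall j, 0 <= xi 0 j <= 1].

Definition shape (a : {ffun 'I_d -> bool}) (xi : 'rV[R]_d) : R :=
  \prod_(j < d) (if a j then xi 0 j else 1 - xi 0 j).
Definition dshape (a : {ffun 'I_d -> bool}) (k : 'I_d) (xi : 'rV[R]_d) : R :=
  (if a k then 1 else -1) *
  \prod_(j < d | j != k) (if a j then xi 0 j else 1 - xi 0 j).

Definition refmap (T : K) (xi : 'rV[R]_d) : 'rV[R]_d :=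
  \sum_a shape a xi *: xv (loc T a).
(* Jacobian: (j,k) entry = d (F_T)_j / d xi_k *)
Definition jac (T : K) (xi : 'rV[R]_d) : 'M[R]_d :=
  \matrix_(j, k) \sum_a dshape a k xi * xv (loc T a) 0 j.
Definition elem (T : K) : set 'rV[R]_d := refmap T @` cube.

Definition face (c : {ffun 'I_d -> option bool}) : set 'rV[R]_d :=
  [set xi | cube xi /\ forall j b, c j = Some b -> xi 0 j = (nat_of_bool b)%:R].
Definition facecorners (c : {ffun 'I_d -> option bool}) : set {ffun 'I_d -> bool} :=
  [set a | forall j b, c j = Some b -> a j = b].

Definition conforming_mesh : Prop :=
  injective xv /\
  (forall T, injective (loc T)) /\
  (forall T xi1 xi2, cube xi1 -> cube xi2 -> refmap T xi1 = refmap T xi2 -> xi1 = xi2) /\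
  (forall T xi, cube xi -> \det (jac T xi) != 0) /\
  [set x | exists T, elem T x] = [set x | inOmegabar x] /\
  (forall i, exists T a, loc T a = i) /\
  (forall T T', T != T' ->
     elem T `&` elem T' = set0 \/
     exists c c' : {ffun 'I_d -> option bool},
       (exists j, c j != None) /\
       elem T `&` elem T' = refmap T @` face c /\
       elem T `&` elem T' = refmap T' @` face c' /\
       loc T @` facecorners c = loc T' @` facecorners c').

(* ---------- Q1 functions, stored by their vertex values ---------- *)
Definition q1s (P : V -> R) (T : K) (xi : 'rV[R]_d) : R :=
  \sum_a shape a xi * P (loc T a).
Definition q1v (U : V -> 'rV[R]_d) (T : K) (xi : 'rV[R]_d) : 'rV[R]_d :=
  \sum_a shape a xi *: U (loc T a).
Definition q1m (S : V -> 'M[R]_d) (T : K) (xi : 'rV[R]_d) : 'M[R]_d :=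
  \sum_a shape a xi *: S (loc T a).

(* physical gradient of a Q1 vector field on element T at the point
   refmap T xi: (j,k) entry = d u_j / d x_k *)
Definition refgrad (U : V -> 'rV[R]_d) (T : K) (xi : 'rV[R]_d) : 'M[R]_d :=
  \matrix_(j, k) \sum_a dshape a k xi * U (loc T a) 0 j.
Definition grad (U : V -> 'rV[R]_d) (T : K) (xi : 'rV[R]_d) : 'M[R]_d :=
  refgrad U T xi *m invmx (jac T xi).
Definition epsilon (U : V -> 'rV[R]_d) (T : K) (xi : 'rV[R]_d) : 'M[R]_d :=
  (1 / 2 : R) *: (grad U T xi + (grad U T xi)^T).
Definition divg (U : V -> 'rV[R]_d) (T : K) (xi : 'rV[R]_d) : R :=
  \tr (grad U T xi).

Fixpoint cubeint (n : nat) : (('I_n -> R) -> R) -> R :=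
  match n return (('I_n -> R) -> R) -> R with
  | 0 => fun h => h (fun _ => 0)
  | n'.+1 => fun h =>
      Rintegral (@lebesgue_measure R) `[0%R, 1%R]
        (fun t : R => cubeint (fun f : 'I_n' -> R =>
           h (fun i : 'I_n'.+1 => if unlift ord0 i is Some j then f j else t)))
  end.

(* integral over the element T of a function given in reference
   coordinates (change of variables x = refmap T xi) *)
Definition elemint (T : K) (g : 'rV[R]_d -> R) : R :=
  cubeint (fun f : 'I_d -> R =>
    let xi := \row_j f j in g xi * `|\det (jac T xi)|).
Definition elemintM (T : K) (G : 'rV[R]_d -> 'M[R]_d) : 'M[R]_d :=
  \matrix_(j, k) elemint T (fun xi => G xi j k).
Definition measK (T : K) : R := elemint T (fun _ => 1).

Definition pi0 (P : V -> R) (T : K) : R := elemint T (q1s P T) / measK T.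

Definition inpatch (i : V) (T : K) : bool :=
  `[< exists xi, cube xi /\ refmap T xi = xv i >].
Definition nodalgrad (U : V -> 'rV[R]_d) (i : V) : 'M[R]_d :=
  (\sum_(T | inpatch i T) measK T)^-1 *:
    \sum_(T | inpatch i T) elemintM T (grad U T).

Definition stokes_step (beta Wi : R) (w : 'rV[R]_d -> 'rV[R]_d)
  (Sprev : V -> 'M[R]_d) (U : V -> 'rV[R]_d) (P : V -> R) : Prop :=
  (forall i, onBoundary (xv i) -> U i = w (xv i)) /\
  forall (Vt : V -> 'rV[R]_d) (Q : V -> R),
    (forall i, onBoundary (xv i) -> Vt i = 0) ->
    \sum_T elemint T (fun xi =>
        2 * beta * ddot (epsilon U T xi) (epsilon Vt T xi)
      - q1s P T xi * divg Vt T xi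
      - q1s Q T xi * divg U T xi
      - (q1s P T xi - pi0 P T) * (q1s Q T xi - pi0 Q T))
    = (beta - 1) / Wi *
      \sum_T elemint T (fun xi => ddot (q1m Sprev T xi) (epsilon Vt T xi)).

Definition transport_step (Wi dt : R) (U : V -> 'rV[R]_d)
  (Sprev Snew : V -> 'M[R]_d) : Prop :=
  forall i, exists T xi, cube xi /\ refmap T xi = xv i - dt *: U i /\
    let F := 1%:M + dt *: nodalgrad U i in
    dt^-1 *: (Snew i - F *m q1m Sprev T xi *m F^T) + Wi^-1 *: (Snew i - 1%:M) = 0.

End OldroydB.

(* Main.v *)
Require Import Defs.
From HB Require Import structures.
From mathcomp Require Import all_boot all_order all_algebra.
From mathcomp Require Import all_classical all_reals all_analysis.
From mathcomp Require Import ring lra.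
Import Order.TTheory GRing.Theory Num.Theory.
Import numFieldNormedType.Exports.
Local Open Scope ring_scope.
Local Open Scope classical_set_scope.
Section Aux.
Variable R : realType.
Variable d : nat.
Implicit Types a b c : 'rV[R]_d.

Lemma dotpE a b : dotp a b = \sum_k a 0 k * b 0 k.
Proof. by rewrite /dotp mxE; apply: eq_bigr => k _; rewrite mxE. Qed.

Lemma dotpDl a b c : dotp (a + b) c = dotp a c + dotp b c.
Proof. by rewrite !dotpE -big_split; apply: eq_bigr => k _; rewrite mxE mulrDl. Qed.

Lemma dotpZl (t : R) a c : dotp (t *: a) c = t * dotp a c.
Proof. by rewrite !dotpE mulr_sumr; apply: eq_bigr => k _; rewrite mxE mulrA. Qed.

Lemma dotpNl a c : dotp (- a) c = - dotp a c.
Proof. by rewrite -scaleN1r dotpZl mulN1r. Qed.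

Lemma dotpBl a b c : dotp (a - b) c = dotp a c - dotp b c.
Proof. by rewrite dotpDl dotpNl. Qed.

Lemma dotpC a b : dotp a b = dotp b a.
Proof. by rewrite !dotpE; apply: eq_bigr => k _; rewrite mulrC. Qed.

Lemma entry_le_norm (M : 'M[R]_(1, d)) i j : `|M i j| <= `|M|.
Proof.
have /mapP[k Hk ->] : `|M i j| \in [seq `|M x.1 x.2| | x : 'I_1 * 'I_d].
  by apply/mapP; exists (i, j) => //=; rewrite mem_enum.
have -> : `|M| = mx_norm M by []. 
by rewrite mx_normrE; apply/bigmax_geP; right => /=; exists k.
Qed.

Lemma dotp_bound a b : `|dotp a b| <= `|a| * \sum_k `|b 0 k|.
Proof.
rewrite dotpE mulr_sumr; apply: le_trans (ler_norm_sum _ _ _) _.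
apply: ler_sum => k _; rewrite normrM ler_wpM2r //; exact: entry_le_norm.
Qed.

Lemma small_pos (I : finType) (P : pred I) (g h : I -> R) :
  (forall i, P i -> 0 < h i) ->
  exists e : R, 0 < e /\ forall i, P i -> e * `|g i| < h i.
Proof.
move=> hP.
pose S := \sum_(i | P i) `|g i| / h i.
have S0 : 0 <= S by apply: sumr_ge0 => i Pi; rewrite divr_ge0 // ltW // hP.
exists (1 + S)^-1; split; first by rewrite invr_gt0; lra.
move=> i Pi; have hi := hP i Pi.
have le : `|g i| / h i <= S by rewrite /S (bigD1 i) //= lerDl; apply: sumr_ge0 => j /andP[Pj _]; rewrite divr_ge0 // ltW // hP.
rewrite ltr_pdivrMl; last by lra.
have -> : `|g i| = (`|g i| / h i) * h i by rewrite divfK // gt_eqF.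
by rewrite ltr_pM2r //; lra.
Qed.

Lemma cont_neg (B : set 'rV[R]_d) (w : 'rV[R]_d -> 'rV[R]_d) (n : 'rV[R]_d) x :
  {within B, continuous w} -> B x -> dotp (w x) n < 0 ->
  exists2 del : R, 0 < del & forall y, B y -> `|x - y| < del -> dotp (w y) n < 0.
Proof.
move=> cont Bx neg.
have cv := (subspace_continuousP _ _).1 cont x Bx.
have [S S0 eS] : exists2 S : R, 0 <= S & S = \sum_k `|n 0 k|.
  by exists (\sum_k `|n 0 k|) => //; apply: sumr_ge0 => k _.
pose eps := - dotp (w x) n / (1 + S).
have eps0 : 0 < eps by rewrite divr_gt0 //; lra.
have Hn : \forall t \near within B (nbhs x), `|w x - w t| < eps.
  exact: ((cvgrPdist_lt _ _).1 cv eps eps0).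
have Hn2 : \forall t \near x, B t -> `|w x - w t| < eps := Hn.
have [del del0 H] := (nbhs_normP _ _).1 Hn2.
exists del => // y By xy.
have := H y xy By => /= lt.
have e1 : dotp (w y) n = dotp (w x) n - dotp (w x - w y) n by rewrite dotpBl; ring.
have b := dotp_bound (w x - w y) n.
have : `|w x - w y| * S <= eps * S by rewrite ler_wpM2r // ltW.
have : eps * S < - dotp (w x) n.
  rewrite /eps mulrAC ltr_pdivrMr; last by lra.
  have : 0 < - dotp (w x) n by lra.
  by move=> p; rewrite mulrDr mulr1 ltrDr.
move: (ler_norm (- dotp (w x - w y) n)); rewrite normrN -eS in b *; lra.
Qed.

Lemma h_onepos (t : R) : 0 <= t -> 0 < 1 + t.
Proof. lra. Qed.
Lemma h_ratio (del z : R) : 0 < del -> 0 <= z -> del / (1 + z) * z < del.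
Proof.
move=> h1 h2; rewrite mulrAC ltr_pdivrMr; last by lra.
by rewrite ltr_pM2l //; lra.
Qed.
Lemma h_out (a e q x c : R) : 0 < a -> a <= e -> e * `|q| < c - x -> x + a * q < c.
Proof.
move=> a0 ae h; have := ler_wpM2l (ltW a0) (ler_norm q).
have := ler_wpM2r (normr_ge0 q) ae; lra.
Qed.
Lemma h_in (A r g c : R) : 0 < A -> r <= g -> c + A * (r - g) <= c.
Proof. move=> h1 h2; nra. Qed.
Lemma h_eq (c X : R) : c + X = c -> X = 0.
Proof. lra. Qed.
Lemma h_u0 (a c : R) : a < c -> a - c < 0.
Proof. lra. Qed.
Lemma h_pert (e q s : R) : 0 < e -> e * `|q| < - s -> s + e * q < 0.
Proof. move=> e0 h; have := ler_wpM2l (ltW e0) (ler_norm q); lra. Qed.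

End Aux.
Arguments dotpE {R d}. Arguments dotpDl {R d}. Arguments dotpZl {R d}.
Arguments dotpNl {R d}. Arguments dotpBl {R d}. Arguments dotpC {R d}.
Arguments dotp_bound {R d}. Arguments entry_le_norm {R d}.
Arguments cont_neg {R d}. Arguments small_pos {R I}.
Arguments h_onepos {R}. Arguments h_ratio {R}. Arguments h_out {R}. Arguments h_in {R}.
Arguments h_eq {R}. Arguments h_u0 {R}. Arguments h_pert {R}.

Section Geo.
Variable R : realType.
Variables d m : nat.
Variables (nrm : 'I_m -> 'rV[R]_d) (cst : 'I_m -> R) (w : 'rV[R]_d -> 'rV[R]_d).
Hypothesis Hunit : forall k, dotp (nrm k) (nrm k) = 1.
Variable x0 : 'rV[R]_d.
Hypothesis Hx0 : inOmega nrm cst x0.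
Hypothesis Hcont : {within [set x | onBoundary nrm cst x], continuous w}.
Hypothesis Htan : tangential nrm cst w.

Definition act x : {set 'I_m} := [set j | dotp x (nrm j) == cst j].

Lemma dotp_self_eq0 (a : 'rV[R]_d) : dotp a a = 0 -> a = 0.
Proof.
rewrite dotpE => h; apply/rowP => k; rewrite mxE.
have h0 : forall i, true -> 0 <= a 0 i * a 0 i by move=> i _; rewrite -expr2 sqr_ge0.
by have := @psumr_eq0P _ _ _ _ h0 h k isT => /eqP; rewrite mulf_eq0 orbb => /eqP.
Qed.

Lemma cross (a b c e : R) : 0 < b -> 0 < e -> a / b = c / e -> a * e = c * b.
Proof.
move=> hb he h; have : a / b * (b * e) = c / e * (b * e) by rewrite h.
by rewrite mulrA divfK ?gt_eqF // [b * e]mulrC mulrA divfK ?gt_eqF.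
Qed.

Lemma dotpDr (a b c : 'rV[R]_d) : dotp a (b + c) = dotp a b + dotp a c.
Proof. by rewrite dotpC dotpDl !(dotpC a). Qed.
Lemma dotpNr (a b : 'rV[R]_d) : dotp a (- b) = - dotp a b.
Proof. by rewrite dotpC dotpNl dotpC. Qed.

Lemma bnd_main n : forall x, (#|act x| <= n)%N -> onBoundary nrm cst x ->
  forall k, k \in act x -> 0 <= dotp (w x) (nrm k).
Proof.
elim: n => [|n IH] x hc hB k hk.
  by move: hc; rewrite leqn0 => /eqP/cards0_eq hA; rewrite hA inE in hk.
rewrite leNgt; apply/negP => hneg.
have hO := hB.1.
pose al j := dotp (- w x) (nrm j).
have alk : 0 < al k by rewrite /al dotpNl oppr_gt0.
have inA j : (j \in act x) = (dotp x (nrm j) == cst j) by rewrite inE.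
have gapP j : j \notin act x -> dotp x (nrm j) < cst j.
  by rewrite inA => hj; rewrite lt_neqAle hj hO.
have main : forall u : 'rV[R]_d, (forall j, j \in act x -> dotp u (nrm j) < 0) ->
   forall j1 j2, j1 \in act x -> j2 \in act x ->
   al j1 / (- dotp u (nrm j1)) != al j2 / (- dotp u (nrm j2)) -> False.
  move=> u hu j1 j2 hj1 hj2 hne.
  pose be j := - dotp u (nrm j).
  pose r j := al j / be j.
  have be0 j : j \in act x -> 0 < be j by move=> hj; rewrite /be oppr_gt0 hu.
  have alr j : j \in act x -> al j = r j * be j.
    by move=> hj; rewrite /r divfK // gt_eqF // be0.
  case: (@arg_maxP _ _ _ k (fun j => j \in act x) r hk) => jm hjm jmax.
  have [g eg] : exists g, g = r jm by exists (r jm).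
  have rle j : j \in act x -> r j <= g by move=> hj; rewrite eg; exact: jmax.
  have g0 : 0 < g.
    have : 0 < r k by rewrite /r divr_gt0 // be0.
    by move=> h; apply: lt_le_trans h (rle k hk).
  pose z := - w x + g *: u.
  have dz j : dotp z (nrm j) = al j - g * be j.
    by rewrite /z dotpDl dotpZl /be /al; ring.
  have wjm : dotp (w x) (nrm jm) < 0.
    have : 0 < al jm by rewrite alr // -eg mulr_gt0 // be0.
    by rewrite /al dotpNl oppr_gt0.
  have [del del0 hdel] := cont_neg _ _ _ _ Hcont hB wjm.
  have [e [e0 he]] := small_pos (fun j => j \notin act x) (fun j => dotp z (nrm j))
     (fun j => cst j - dotp x (nrm j)) (fun j hj => ltac:(by rewrite subr_gt0 gapP)).
  have [a [a0 ae ad]] : exists a : R, [/\ 0 < a, a <= e & a * `|z| < del].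
    exists (Num.min e (del / (1 + `|z|))); split.
    - by rewrite lt_min e0 divr_gt0 // h_onepos.
    - by rewrite ge_min lexx.
    - apply: (@le_lt_trans _ _ (del / (1 + `|z|) * `|z|)).
        by rewrite ler_wpM2r // ge_min lexx orbT.
      exact: h_ratio.
  pose y := x + a *: z.
  have dy j : dotp y (nrm j) = dotp x (nrm j) + a * dotp z (nrm j).
    by rewrite /y dotpDl dotpZl.
  have yout j : j \notin act x -> dotp y (nrm j) < cst j.
    by move=> hj; rewrite dy; apply: h_out a0 ae (he j hj).
  have yin j : j \in act x -> dotp y (nrm j) = cst j + a * be j * (r j - g).
    move=> hj; rewrite dy dz (alr j hj); move: hj; rewrite inA => /eqP ->; ring.
  have yle j : dotp y (nrm j) <= cst j.
    case hj : (j \in act x); last by apply: ltW; apply: yout; rewrite hj.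
    by rewrite yin //; apply: h_in; [exact: mulr_gt0 a0 (be0 j hj)|exact: rle].
  have actyx j : j \in act y -> j \in act x.
    move=> hj; apply/negPn/negP => hnj; have := yout j hnj.
    by move: hj; rewrite inE => /eqP ->; rewrite ltxx.
  have jmy : jm \in act y by rewrite inE yin // -eg subrr mulr0 addr0.
  have hyB : onBoundary nrm cst y by split; [exact: yle | exists jm; move: jmy; rewrite inE => /eqP].
  have [j0 hj0 hj0y] : exists2 j0, j0 \in act x & j0 \notin act y.
    case: (eqVneq (r j1) g) => h1; last first.
      exists j1 => //; apply/negP; rewrite inE yin // => /eqP h.
      have := h_eq _ _ h.
      by move/eqP; rewrite !mulf_eq0 subr_eq0 (negbTE h1) gt_eqF // gt_eqF // be0.
    exists j2 => //; apply/negP; rewrite inE yin // => /eqP h.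
    have := h_eq _ _ h.
    move/eqP; rewrite !mulf_eq0 subr_eq0 gt_eqF // gt_eqF ?be0 //= => /eqP h2.
    by move: hne; rewrite -/(be j1) -/(be j2) -/(r j1) -/(r j2) h1 h2 eqxx.
  have hlt : (#|act y| < #|act x|)%N.
    apply: proper_card; apply/properP; split; last by exists j0.
    by apply/fintype.subsetP => j; apply: actyx.
  have hcy : (#|act y| <= n)%N by rewrite -ltnS; apply: leq_trans hlt hc.
  have := IH y hcy hyB jm jmy.
  have : `|x - y| < del.
    by rewrite /y opprD addrA subrr add0r normrN normrZ gtr0_norm.
  by move=> hxy h0; have := hdel y hyB hxy; rewrite ltNge h0.
pose u0 := x0 - x.
have hu0 j : j \in act x -> dotp u0 (nrm j) < 0.
  move=> hj; rewrite /u0 dotpBl; move: hj; rewrite inA => /eqP ->; exact: h_u0 _ _ (Hx0 j).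
pose be0 j := - dotp u0 (nrm j).
have be0p j : j \in act x -> 0 < be0 j by move=> hj; rewrite /be0 oppr_gt0 hu0.
case: (pselect (exists j1, j1 \in act x /\ al j1 / be0 j1 != al k / be0 k)) => [[j1 [hj1 hne]]|hall].
  exact: (main u0 hu0 j1 k hj1 hk hne).
have eqr j : j \in act x -> al j / be0 j = al k / be0 k.
  by move=> hj; apply/eqP; apply/negPn/negP => hn; apply: hall; exists j.
case: (pselect (exists j1, j1 \in act x /\ nrm j1 != nrm k)) => [[j1 [hj1 hn1]]|hsame]; last first.
  have hxk : dotp x (nrm k) = cst k by move: hk; rewrite inA => /eqP.
  suff h : dotp (w x) (nrm k) = 0 by rewrite h ltxx in hneg.
  apply: (Htan x k hO hxk) => j hj; apply/eqP/negPn/negP => hn.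
  by apply: hsame; exists j; split => //; rewrite inA hj eqxx.
have perturb : forall z : 'rV[R]_d, exists2 u : 'rV[R]_d,
    (forall j, j \in act x -> dotp u (nrm j) < 0) & exists2 eps : R, 0 < eps & u = u0 + eps *: z.
  move=> z; have [e [e0 he]] := small_pos (fun j => j \in act x) (fun j => dotp z (nrm j)) be0 be0p.
  exists (u0 + e *: z); last by exists e.
  move=> j hj; rewrite dotpDl dotpZl; have := he j hj; rewrite /be0.
  move: (dotp z (nrm j)) (dotp u0 (nrm j)) => q s h.
  exact: h_pert.
have [u1 hu1 [e1 e10 eu1]] := perturb (nrm k).
have [u2 hu2 [e2 e20 eu2]] := perturb (nrm j1).
case: (eqVneq (al j1 / (- dotp u1 (nrm j1))) (al k / (- dotp u1 (nrm k)))) => t1; last first.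
  exact: (main u1 hu1 j1 k hj1 hk t1).
case: (eqVneq (al j1 / (- dotp u2 (nrm j1))) (al k / (- dotp u2 (nrm k)))) => t2; last first.
  exact: (main u2 hu2 j1 k hj1 hk t2).
have [p ep] : exists p, p = dotp (nrm k) (nrm j1) by exists (dotp (nrm k) (nrm j1)).
have d11 : - dotp u1 (nrm j1) = be0 j1 - e1 * p by rewrite eu1 dotpDl dotpZl ep /be0; ring.
have d1k : - dotp u1 (nrm k) = be0 k - e1 by rewrite eu1 dotpDl dotpZl Hunit /be0; ring.
have d21 : - dotp u2 (nrm j1) = be0 j1 - e2 by rewrite eu2 dotpDl dotpZl Hunit /be0; ring.
have d2k : - dotp u2 (nrm k) = be0 k - e2 * p by rewrite eu2 dotpDl dotpZl (dotpC (nrm j1)) -ep /be0; ring.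
have p11 : 0 < - dotp u1 (nrm j1) by rewrite oppr_gt0 hu1.
have p1k : 0 < - dotp u1 (nrm k) by rewrite oppr_gt0 hu1.
have p21 : 0 < - dotp u2 (nrm j1) by rewrite oppr_gt0 hu2.
have p2k : 0 < - dotp u2 (nrm k) by rewrite oppr_gt0 hu2.
have c0 := cross _ _ _ _ (be0p j1 hj1) (be0p k hk) (eqr j1 hj1).
have c1 := cross _ _ _ _ p11 p1k t1.
have c2 := cross _ _ _ _ p21 p2k t2.
rewrite d11 d1k in c1; rewrite d21 d2k in c2.
have b1 := be0p j1 hj1; have bk := be0p k hk.
have A1 : 0 < al j1.
  have : 0 < al j1 * be0 k by rewrite c0; apply: mulr_gt0.
  by rewrite pmulr_lgt0.
have q1 : al j1 = al k * p.
  have : e1 * (al j1 - al k * p) = 0.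
    have -> : e1 * (al j1 - al k * p) = (al j1 * be0 k - al k * be0 j1)
       - (al j1 * (be0 k - e1) - al k * (be0 j1 - e1 * p)) by ring.
    by rewrite c0 c1 !subrr.
  by move/eqP; rewrite mulf_eq0 gt_eqF //= subr_eq0 => /eqP.
have q2 : al j1 * p = al k.
  have : e2 * (al j1 * p - al k) = 0.
    have -> : e2 * (al j1 * p - al k) = (al j1 * be0 k - al k * be0 j1)
       - (al j1 * (be0 k - e2 * p) - al k * (be0 j1 - e2)) by ring.
    by rewrite c0 c2 !subrr.
  by move/eqP; rewrite mulf_eq0 gt_eqF //= subr_eq0 => /eqP.
have pp : p = 1.
  have p0 : 0 < p by move: A1; rewrite q1 pmulr_rgt0.
  have : al k * (p * p - 1) = 0.
    have -> : al k * (p * p - 1) = (al k * p) * p - al k by ring.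
    by rewrite -q1 q2 subrr.
  move/eqP; rewrite mulf_eq0 gt_eqF //= subr_eq0 => /eqP h.
  have : (p - 1) * (p + 1) = 0.
    have -> : (p - 1) * (p + 1) = p * p - 1 by ring.
    by rewrite h subrr.
  move/eqP; rewrite mulf_eq0 subr_eq0 => /orP[/eqP //|].
  by rewrite gt_eqF // ltr_wpDl // ltW.
have : nrm k - nrm j1 = 0.
  apply: dotp_self_eq0; rewrite dotpBl !dotpDr !dotpNr !Hunit (dotpC (nrm j1) (nrm k)) -ep pp; ring.
by move/eqP; rewrite subr_eq0 eq_sym (negbTE hn1).
Qed.
End Geo.

Section Final.
Variable R : realType.
Variable d : nat.

Lemma corner_shape (a b : {ffun 'I_d -> bool}) :
  Defs.shape b (\row_j ((a j)%:R : R)) = ((b == a)%:R : R).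
Proof.
rewrite /Defs.shape; case: eqP => [->|/eqP hne].
  by apply: big1 => j _; rewrite mxE; case: (a j); rewrite ?subr0.
have [j hj] : exists j, b j != a j.
  apply/existsP; apply: contraNT hne => /existsPn h; apply/eqP/ffunP => j.
  by apply/eqP; rewrite -[_ == _]negbK h.
rewrite (bigD1 j) //= mxE; move: hj.
by case: (b j); case: (a j) => //= _; rewrite ?subrr mul0r.
Qed.

Lemma corner_cube (a : {ffun 'I_d -> bool}) : cube (\row_j ((a j)%:R : R)).
Proof. by move=> j; rewrite mxE; case: (a j); rewrite /= ?lexx ?ler01. Qed.

Lemma corner_refmap (V K : finType) (xv : V -> 'rV[R]_d) loc (T : K) (a : {ffun 'I_d -> bool}) :
  refmap xv loc T (\row_j ((a j)%:R : R)) = xv (loc T a).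
Proof.
rewrite /refmap (bigD1 a) //= corner_shape eqxx scale1r big1 ?addr0 // => b hb.
by rewrite corner_shape (negbTE hb) scale0r.
Qed.

Lemma vert_in m nrm cst (V K : finType) (xv : V -> 'rV[R]_d) loc :
  @conforming_mesh R d m nrm cst V K xv loc -> forall i, inOmegabar nrm cst (xv i).
Proof.
case=> _ [_ [_ [_ [cov [corn _]]]]] i.
have [T [a <-]] := corn i.
have : [set x | exists T, elem xv loc T x] (xv (loc T a)).
  by exists T; exists (\row_j ((a j)%:R : R)); [exact: corner_cube| exact: corner_refmap].
by rewrite cov.
Qed.

Lemma in_elem m nrm cst (V K : finType) (xv : V -> 'rV[R]_d) loc y :
  @conforming_mesh R d m nrm cst V K xv loc -> inOmegabar nrm cst y ->
  exists T xi, cube xi /\ refmap xv loc T xi = y.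
Proof.
case=> _ [_ [_ [_ [cov _]]]]; rewrite -[inOmegabar _ _ y]/([set x | inOmegabar nrm cst x] y).
by rewrite -cov => -[T [xi hc he]]; exists T, xi.
Qed.

Definition qf (v : 'rV[R]_d) (A : 'M[R]_d) : R := (v *m A *m v^T) 0 0.
Lemma qfD v A B : qf v (A + B) = qf v A + qf v B.
Proof. by rewrite /qf mulmxDr mulmxDl mxE. Qed.
Lemma qfZ v c A : qf v (c *: A) = c * qf v A.
Proof. by rewrite /qf -scalemxAr -scalemxAl mxE. Qed.
Lemma qf_sum v (I : finType) (F : I -> 'M[R]_d) : qf v (\sum_i F i) = \sum_i qf v (F i).
Proof. by rewrite /qf mulmx_sumr mulmx_suml summxE. Qed.
Lemma qfM v F S : qf v (F *m S *m F^T) = qf (v *m F) S.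
Proof. by rewrite /qf trmx_mul !mulmxA. Qed.
Lemma qf0 A : qf 0 A = 0.
Proof. by rewrite /qf !mul0mx mxE. Qed.
Lemma qf1 v : v != 0 -> 0 < qf v 1%:M.
Proof.
move=> hv; have [k hk] : exists k, v 0 k != 0.
  apply/existsP; apply: contraNT hv => /existsPn h; apply/eqP/rowP => k.
  by rewrite mxE; apply/eqP; rewrite -[_ == _]negbK h.
rewrite /qf mulmx1 mxE (bigD1 k) //= mxE.
have p : 0 < v 0 k * v 0 k by rewrite -expr2 exprn_even_gt0.
have s0 : 0 <= \sum_(i < d | i != k) v 0 i * (v^T) i 0.
  by apply: sumr_ge0 => i _; rewrite mxE -expr2 sqr_ge0.
by apply: lt_le_trans p _; rewrite lerDl.
Qed.

Lemma shape_ge0 a (xi : 'rV[R]_d) : cube xi -> 0 <= Defs.shape a xi.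
Proof.
move=> hc; apply: prodr_ge0 => j _; have /andP[h0 h1] := hc j.
by case: (a j) => //; rewrite subr_ge0.
Qed.

Lemma q1m_psd (V K : finType) loc (S : V -> 'M[R]_d) (T : K) xi :
  (forall i, posdef (S i)) -> cube xi -> forall v, 0 <= qf v (q1m loc S T xi).
Proof.
move=> hS hc v; rewrite /q1m qf_sum; apply: sumr_ge0 => a _; rewrite qfZ.
apply: mulr_ge0; first exact: shape_ge0.
case: (eqVneq v 0) => [->|hv]; first by rewrite qf0.
exact: ltW ((hS _).2 v hv).
Qed.

Lemma q1m_sym (V K : finType) loc (S : V -> 'M[R]_d) (T : K) xi :
  (forall i, posdef (S i)) -> (q1m loc S T xi)^T = q1m loc S T xi.
Proof.
move=> hS; apply/matrixP => r c; rewrite mxE !summxE; apply: eq_bigr => a _.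
rewrite !mxE; congr (_ * _).
by move/matrixP: (hS (loc T a)).1 => /(_ c r); rewrite mxE.
Qed.

Lemma symM (F S : 'M[R]_d) : S^T = S -> (F *m S *m F^T)^T = F *m S *m F^T.
Proof. by move=> h; rewrite !trmx_mul trmxK h mulmxA. Qed.

Lemma solve_mat (dt Wi : R) (MM : 'M[R]_d) : 0 < dt -> 0 < Wi ->
  dt^-1 *: ((Wi + dt)^-1 *: (Wi *: MM + dt *: 1%:M) - MM)
  + Wi^-1 *: ((Wi + dt)^-1 *: (Wi *: MM + dt *: 1%:M) - 1%:M) = 0.
Proof.
move=> h1 h2; apply/matrixP => r c; rewrite !mxE.
have n1 : dt != 0 by rewrite gt_eqF.
have n2 : Wi != 0 by rewrite gt_eqF.
have n3 : Wi + dt != 0 by rewrite gt_eqF // addr_gt0.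
move: (MM r c) ((r == c)%:R : R) => mm dl.
by field; rewrite n1 n2 n3.
Qed.

Lemma solve_mat_inv (dt Wi : R) (MM Sn : 'M[R]_d) : 0 < dt -> 0 < Wi ->
  dt^-1 *: (Sn - MM) + Wi^-1 *: (Sn - 1%:M) = 0 ->
  Sn = (Wi + dt)^-1 *: (Wi *: MM + dt *: 1%:M).
Proof.
move=> h1 h2 /matrixP h; apply/matrixP => r c; have := h r c; rewrite !mxE.
have n1 : dt != 0 by rewrite gt_eqF.
have n2 : Wi != 0 by rewrite gt_eqF.
have n3 : Wi + dt != 0 by rewrite gt_eqF // addr_gt0.
move: (Sn r c) (MM r c) ((r == c)%:R : R) => s mm dl e.
apply: (mulfI n3); rewrite mulVKf //.
have e2 : Wi * (s - mm) + dt * (s - dl) = 0.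
  have -> : Wi * (s - mm) + dt * (s - dl)
      = dt * Wi * (dt^-1 * (s - mm) + Wi^-1 * (s - dl)) by field; rewrite n1 n2.
  by rewrite e mulr0.
apply/eqP; rewrite -subr_eq0; apply/eqP; rewrite -e2; ring.
Qed.

Lemma posdef_new (dt Wi : R) (MM : 'M[R]_d) : 0 < dt -> 0 < Wi ->
  MM^T = MM -> (forall v, 0 <= qf v MM) ->
  posdef ((Wi + dt)^-1 *: (Wi *: MM + dt *: 1%:M)).
Proof.
move=> h1 h2 hs hp; split.
  by apply/matrixP => r c; rewrite !mxE eq_sym; move/matrixP: hs => /(_ c r); rewrite mxE => ->.
move=> v hv; rewrite -/(qf v _) qfZ qfD !qfZ.
apply: mulr_gt0; first by rewrite invr_gt0 addr_gt0.
apply: ltr_wpDl; first exact: mulr_ge0 (ltW h2) (hp v).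
apply: mulr_gt0 => //; exact: qf1.
Qed.

Lemma h_foot1 (e q x c : R) : 0 < e -> e * `|q| < c - x -> x - e * q <= c.
Proof. move=> e0 h; have := ler_wpM2l (ltW e0) (ler_norm (- q)); rewrite normrN; lra. Qed.
Lemma h_foot2 (e q x c : R) : 0 < e -> 0 <= q -> x = c -> x - e * q <= c.
Proof. move=> e0 q0 ->; have := mulr_ge0 (ltW e0) q0; lra. Qed.

End Final.
Arguments vert_in {R d m nrm cst V K xv loc}.
Arguments in_elem {R d m nrm cst V K xv loc y}.
Arguments solve_mat {R d dt Wi MM}.
Arguments solve_mat_inv {R d dt Wi MM Sn}.
Arguments posdef_new {R d dt Wi MM}.
Arguments symM {R d F S}.
Arguments q1m_sym {R d V K loc S T xi}.
Arguments q1m_psd {R d V K loc S T xi}.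
Arguments qfM {R d}.
Arguments h_foot1 {R e q x c}.
Arguments h_foot2 {R e q x c}.
Arguments bnd_main {R d m nrm cst w} Hunit {x0} Hx0 Hcont Htan {n x} _ _ {k} _.

Theorem proposition5 (R : realType) (d : nat) (V K : finType)
  (xv : V -> 'rV[R]_d) (loc : K -> {ffun 'I_d -> bool} -> V)
  (m : nat) (nrm : 'I_m -> 'rV[R]_d) (cst : 'I_m -> R)
  (Wi beta : R) (w : 'rV[R]_d -> 'rV[R]_d) (sigma0 : 'rV[R]_d -> 'M[R]_d) :
  (d = 2 \/ d = 3)%N ->
  convex_polygonal_domain nrm cst ->
  conforming_mesh nrm cst xv loc ->
  0 < Wi -> 0 < beta < 1 ->
  {within [set x | onBoundary nrm cst x], continuous w} ->
  tangential nrm cst w ->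
  (forall x, inOmegabar nrm cst x -> posdef (sigma0 x)) ->
  (* Sigma^0 (nodal interpolant of sigma^0) is positive definite *)
  (forall i, posdef (sigma0 (xv i))) /\
  (* and at each time step n >= 1: if Sigma^{n-1} is positive definite and
     (u^n, p^n) solves step (i), then some dt > 0 makes step (ii)
     well defined and every resulting Sigma^n positive definite *)
  (forall (Sprev : V -> 'M[R]_d) (U : V -> 'rV[R]_d) (P : V -> R),
     (forall i, posdef (Sprev i)) ->
     stokes_step nrm cst xv loc beta Wi w Sprev U P ->
     exists dt : R, 0 < dt /\
       (exists Snew, transport_step xv loc Wi dt U Sprev Snew) /\
       (forall Snew, transport_step xv loc Wi dt U Sprev Snew ->
          forall i, posdef (Snew i))).
Proof.
move=> _ [Hunit [[x0 Hx0] _]] Hmesh Wi0 _ Hcont Htan Hsig.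
have vin := vert_in Hmesh.
split; first by move=> i; apply: Hsig; apply: vin.
move=> Sprev U P HS [HU _].
have [dt [dt0 hfoot]] : exists dt : R, 0 < dt /\
    forall i, inOmegabar nrm cst (xv i - dt *: U i).
  have [e [e0 he]] := small_pos (I := (V * 'I_m)%type)
    (fun p => dotp (xv p.1) (nrm p.2) < cst p.2)
    (fun p => dotp (U p.1) (nrm p.2)) (fun p => cst p.2 - dotp (xv p.1) (nrm p.2))
    (fun p hp => ltac:(by rewrite subr_gt0)).
  exists e; split => // i j; rewrite dotpBl dotpZl.
  case hlt : (dotp (xv i) (nrm j) < cst j).
    exact: h_foot1 e0 (he (i, j) hlt).
  have heq : dotp (xv i) (nrm j) = cst j.
    by move: (vin i j); rewrite le_eqVlt hlt orbF => /eqP.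
  have hB : onBoundary nrm cst (xv i) by split; [exact: vin | exists j].
  have hk : j \in act R d m nrm cst (xv i) by rewrite inE heq eqxx.
  apply: h_foot2 e0 _ heq; rewrite HU //.
  exact: (bnd_main Hunit Hx0 Hcont Htan (leqnn _) hB hk).
exists dt; split => //; split.
  have pick : forall i, {p : K * 'rV[R]_d | cube p.2 /\ refmap xv loc p.1 p.2 = xv i - dt *: U i}.
    move=> i; apply: cid; have [T [xi [hc he]]] := in_elem Hmesh (hfoot i).
    by exists (T, xi).
  pose MM (i : V) := (1%:M + dt *: nodalgrad xv loc U i) *m q1m loc Sprev (sval (pick i)).1 (sval (pick i)).2
     *m (1%:M + dt *: nodalgrad xv loc U i)^T.
  exists (fun i => (Wi + dt)^-1 *: (Wi *: MM i + dt *: 1%:M)).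
  move=> i; exists (sval (pick i)).1, (sval (pick i)).2.
  have [hc he] := svalP (pick i); split => //; split => //.
  exact: solve_mat.
move=> Snew hT i; have [T [xi [hc [_ heq]]]] := hT i.
rewrite (solve_mat_inv dt0 Wi0 heq).
apply: posdef_new => //.
  by apply: symM; apply: q1m_sym.
by move=> v; rewrite qfM; apply: q1m_psd.
Qed.
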